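(* Let $\beta=(\pi_\ell)_{\ell=1}^L$ be a chainable and non-redundant architecture. Then for any $1\le q\le s<t\le L$, the pair $(\pi_q*\cdots*\pi_s,\ \pi_{s+1}*\cdots*\pi_t)$ is chainable and non-redundant.
   Context: A pattern is a tuple $\pi=(a,b,c,d)$ of positive integers. Patterns $\pi=(a,b,c,d),\pi'=(a',b',c',d')$ are chainable if $ac/a'=b'd'/d$, this common value $r(\pi,\pi')$ is an integer, $a\mid a'$ and $d'\mid d$; then $\pi*\pi':=(a,bd/d',a'c'/a,d')$. A chainable pair $(\pi,\pi')$ is redundant if $r(\pi,\pi')\ge\min(b,c')$, and non-redundant otherwise. An architecture $\beta=(\pi_\ell)_{\ell=1}^L$, $\pi_\ell=(a_\ell,b_\ell,c_\ell,d_\ell)$, is a sequence of patterns with $a_\ell c_\ell d_\ell=a_{\ell+1}b_{\ell+1}d_{\ell+1}$; it is chainable if every consecutive pair is chainable, and a chainable architecture is redundant if some consecutive pair $(\pi_\ell,\pi_{\ell+1})$ is redundant. $\pi_q*\cdots*\pi_s$ is the iterated product. *)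

(* Defs.v *)
From mathcomp Require Import all_boot.
Set Implicit Arguments. Unset Strict Implicit. Unset Printing Implicit Defensive.

Record pattern := Pat { pa : nat; pb : nat; pc : nat; pd : nat }.

Definition pos_pattern (p : pattern) : Prop :=
  0 < pa p /\ 0 < pb p /\ 0 < pc p /\ 0 < pd p.

Definition chainable (p p' : pattern) : Prop :=
  (exists r : nat, pa p * pc p = r * pa p' /\ pb p' * pd p' = r * pd p)
  /\ pa p %| pa p' /\ pd p' %| pd p.

(* the common value r(p,p') (meaningful when chainable) *)
Definition rval (p p' : pattern) : nat := (pa p * pc p) %/ pa p'.

(* pi * pi' = (a, b d / d', a' c' / a, d')  (exact divisions when chainable) *)
Definition pstar (p p' : pattern) : pattern :=
  Pat (pa p) ((pb p * pd p) %/ pd p') ((pa p' * pc p') %/ pa p) (pd p').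

Definition redundant_pair (p p' : pattern) : Prop :=
  chainable p p' /\ minn (pb p) (pc p') <= rval p p'.

Definition nonredundant_pair (p p' : pattern) : Prop :=
  chainable p p' /\ rval p p' < minn (pb p) (pc p').

Definition pat0 : pattern := Pat 1 1 1 1.

Definition pi_ (beta : seq pattern) (l : nat) : pattern := nth pat0 beta l.-1.

Definition architecture (beta : seq pattern) : Prop :=
  (forall l, 1 <= l <= size beta -> pos_pattern (pi_ beta l)) /\
  (forall l, 1 <= l -> l < size beta ->
     pa (pi_ beta l) * pc (pi_ beta l) * pd (pi_ beta l) =
     pa (pi_ beta l.+1) * pb (pi_ beta l.+1) * pd (pi_ beta l.+1)).

Definition chainable_arch (beta : seq pattern) : Prop :=
  architecture beta /\
  forall l, 1 <= l -> l < size beta -> chainable (pi_ beta l) (pi_ beta l.+1).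

Definition nonredundant_arch (beta : seq pattern) : Prop :=
  forall l, 1 <= l -> l < size beta -> ~ redundant_pair (pi_ beta l) (pi_ beta l.+1).

Definition iprod (beta : seq pattern) (q s : nat) : pattern :=
  foldl pstar (pi_ beta q) [seq pi_ beta k | k <- iota q.+1 (s - q)].

(* Main.v *)
Require Import Defs.
From mathcomp Require Import all_boot.
From mathcomp Require Import zify.

Lemma iprod_closed beta q n :
  0 < pa (pi_ beta q) -> 0 < pd (pi_ beta q) ->
  (forall k, k <= n -> pd (pi_ beta (q + k)) %| pd (pi_ beta q)) ->
  iprod beta q (q + n) =
  Pat (pa (pi_ beta q)) (pb (pi_ beta q) * pd (pi_ beta q) %/ pd (pi_ beta (q + n)))
      (pa (pi_ beta (q + n)) * pc (pi_ beta (q + n)) %/ pa (pi_ beta q))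
      (pd (pi_ beta (q + n))).
Proof.
move=> Ha Hd Hdv; rewrite /iprod addKn.
elim: n Hdv => [|n IH] Hdv.
  rewrite /= addn0 mulnK // mulKn //; by case: (pi_ beta q).
have ->: iota q.+1 n.+1 = iota q.+1 n ++ [:: q.+1 + n] by rewrite -[n.+1]addn1 iotaD.
rewrite map_cat foldl_cat IH; last by move=> k Hk; apply: Hdv; lia.
rewrite /= /pstar /= -addSnnS divnK //; apply: dvdn_mull; apply: Hdv; lia.
Qed.

Lemma pos_of beta l : chainable_arch beta -> 1 <= l <= size beta ->
  pos_pattern (pi_ beta l).
Proof. by move=> [[Hp _] _] Hl; apply: Hp. Qed.

Lemma step_facts beta l : chainable_arch beta -> nonredundant_arch beta ->
  1 <= l -> l < size beta ->
  exists r, pa (pi_ beta l) * pc (pi_ beta l) = r * pa (pi_ beta l.+1) /\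
    pb (pi_ beta l.+1) * pd (pi_ beta l.+1) = r * pd (pi_ beta l) /\
    pa (pi_ beta l) %| pa (pi_ beta l.+1) /\
    pd (pi_ beta l.+1) %| pd (pi_ beta l) /\
    r < minn (pb (pi_ beta l)) (pc (pi_ beta l.+1)) /\
    rval (pi_ beta l) (pi_ beta l.+1) = r.
Proof.
move=> Hc Hn H1 H2.
have [[r [E1 E2]] [D1 D2]] := Hc.2 l H1 H2.
have [pa' _] : pos_pattern (pi_ beta l.+1) by apply: pos_of => //; lia.
have Hr : rval (pi_ beta l) (pi_ beta l.+1) = r by rewrite /rval E1 mulnK.
exists r; do 5 (split => //).
rewrite -Hr ltnNge; apply/negP => Hle; apply: (Hn l H1 H2); split => //.
by split => //; exists r.
Qed.

Lemma range_facts beta q n : chainable_arch beta -> nonredundant_arch beta ->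
  1 <= q -> q + n <= size beta ->
  [/\ pd (pi_ beta (q + n)) %| pd (pi_ beta q),
      pa (pi_ beta q) %| pa (pi_ beta (q + n)),
      pb (pi_ beta (q + n)) * pd (pi_ beta (q + n)) <= pb (pi_ beta q) * pd (pi_ beta q) &
      pa (pi_ beta q) * pc (pi_ beta q) <= pa (pi_ beta (q + n)) * pc (pi_ beta (q + n))].
Proof.
move=> Hc Hn Hq; elim: n => [|n IH] Hs; first by rewrite addn0.
have Hs' : q + n < size beta by rewrite addnS in Hs.
have [I1 I2 I3 I4] := IH (ltnW Hs').
have Hq' : 1 <= q + n by lia.
have [r [E1 [E2 [D1 [D2 [Hr _]]]]]] := step_facts beta (q + n) Hc Hn Hq' Hs'.
have [pa0 [pb0 [pc0 pd0]]] : pos_pattern (pi_ beta (q + n)) by apply: pos_of => //; lia.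
have [pa1 [pb1 [pc1 pd1]]] : pos_pattern (pi_ beta (q + n).+1) by apply: pos_of => //; lia.
rewrite addnS; split.
- exact: dvdn_trans D2 I1.
- exact: dvdn_trans I2 D1.
- rewrite E2; apply: (leq_trans _ I3); apply: leq_mul => //.
  apply: ltnW; apply: leq_trans Hr _; exact: geq_minl.
- apply: (leq_trans I4); rewrite E1 mulnC; apply: leq_mul => //.
  apply: ltnW; apply: leq_trans Hr _; exact: geq_minr.
Qed.

Theorem lemma4p12 (beta : seq pattern) :
  chainable_arch beta -> nonredundant_arch beta ->
  forall q s t : nat, 1 <= q -> q <= s -> s < t -> t <= size beta ->
    nonredundant_pair (iprod beta q s) (iprod beta (s.+1) t).
Proof.
move=> Hc Hn q s t Hq Hqs Hst Ht.
have [n1 E1s] : exists n1, s = q + n1 by exists (s - q); lia.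
have [n2 E2t] : exists n2, t = s.+1 + n2 by exists (t - s.+1); lia.
subst t.
have [I1 I2 I3 I4] := range_facts beta q n1 Hc Hn Hq (ltac:(lia) : q + n1 <= size beta).
have Hs1 : 1 <= s.+1 by [].
have [J1 J2 J3 J4] := range_facts beta s.+1 n2 Hc Hn Hs1 Ht.
have Hs0 : 1 <= s by lia.
have Hss : s < size beta by apply: leq_trans Ht; exact: leq_addr.
have [r [E1 [E2 [D1 [D2 [Hr Hrv]]]]]] := step_facts beta s Hc Hn Hs0 Hss.
have [paq [_ [_ pdq]]] : pos_pattern (pi_ beta q) by apply: pos_of => //; clear -Hq Hqs Ht Hss; lia.
have [pas [pbs [_ pds]]] : pos_pattern (pi_ beta s) by apply: pos_of => //; clear -Hq Hqs Ht Hss; lia.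
have [pas1 [_ [pcs1 pds1]]] : pos_pattern (pi_ beta s.+1) by apply: pos_of => //; clear -Hq Hqs Ht Hss; lia.
have Hs2 : s = q + n1 by [].
rewrite {1}Hs2 (iprod_closed beta q n1) //; last first.
  move=> k Hk; have [K1 _ _ _] := range_facts beta q k Hc Hn Hq (ltac:(clear -Hk Hss E1s; lia) : q + k <= size beta); exact K1.
rewrite (iprod_closed beta s.+1 n2) //; last first.
  move=> k Hk; have [K1 _ _ _] := range_facts beta s.+1 k Hc Hn Hs1 (ltac:(clear -Hk Ht; lia) : s.+1 + k <= size beta); exact K1.
rewrite -Hs2.
have EA : pa (pi_ beta q) * (pa (pi_ beta s) * pc (pi_ beta s) %/ pa (pi_ beta q))
          = pa (pi_ beta s) * pc (pi_ beta s).
  by rewrite mulnC divnK //; apply: dvdn_mulr; rewrite -Hs2 in I2.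
have ED : pb (pi_ beta s.+1) * pd (pi_ beta s.+1) %/ pd (pi_ beta (s.+1 + n2)) * pd (pi_ beta (s.+1 + n2))
          = pb (pi_ beta s.+1) * pd (pi_ beta s.+1).
  by rewrite divnK //; apply: dvdn_mull.
rewrite -Hs2 in I1 I2 I3 I4.
split.
  split; first by exists r; rewrite /= EA ED.
  by split; [apply: dvdn_trans I2 D1 | apply: dvdn_trans J1 D2].
rewrite /rval /= EA.
move: Hrv; rewrite /rval => ->.
rewrite leq_min; apply/andP; split.
- rewrite leq_divRL //; apply: leq_trans I3; rewrite leq_mul2r; apply/orP; right.
  apply: leq_trans Hr _; exact: geq_minl.
- rewrite leq_divRL //; apply: leq_trans J4; rewrite mulnC leq_mul2l; apply/orP; right.
  apply: leq_trans Hr _; exact: geq_minr.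
Qed.
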